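(* Let $G$ be a locally compact group, $K$ a compact subgroup of $G$, and $\omega$ a $K$-bi-invariant weight on $G$ with $\omega(e) = 1$. If $(G, K, \omega)$ is a weighted Gelfand pair, then for every $f \in C_c(K\setminus G/K)$, $$\int_G f(x)\,\omega(x)\,\omega(x^{-1})\,dx = \int_G f(x^{-1})\,\omega(x^{-1})\,\omega(x)\,dx.$$
   Context: A weight on $G$ is a continuous function $\omega: G \to (0,\infty)$; it is $K$-bi-invariant if $\omega(k_1 x k_2)=\omega(x)$ for all $x\in G$, $k_1,k_2\in K$. $e$ is the identity of $G$. Integration on $G$ is with respect to a fixed left Haar measure. The weighted convolution is $(f \ast_\omega g)(x) = \int_G f(y) g(y^{-1}x) \frac{\omega(y)\omega(y^{-1}x)}{\omega(x)}\,dy$. $\mathcal{L}^1_\omega(K\setminus G/K)$ is the space of (classes of) measurable $K$-bi-invariant $f:G\to\mathbb{C}$ with $\int_G|f|\omega<\infty$. $(G,K,\omega)$ is a weighted Gelfand pair if $(\mathcal{L}^1_\omega(K\setminus G/K),\ast_\omega)$ is commutative. $C_c(K\setminus G/K)$ is the space of continuous compactly supported $K$-bi-invariant complex functions on $G$. *)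

(* Defs.v *)
From HB Require Import structures.
From mathcomp Require Import all_boot all_order all_algebra.
From mathcomp Require Import all_classical all_reals all_analysis.
From mathcomp Require Import complex.

Set Implicit Arguments.
Unset Strict Implicit.
Unset Printing Implicit Defensive.

Import Order.TTheory GRing.Theory Num.Theory.
Import numFieldNormedType.Exports.

Local Open Scope classical_set_scope.
Local Open Scope ring_scope.
Local Open Scope complex_scope.

Definition borel (G : ptopologicalType) := g_sigma_algebraType (@open G).

Definition is_lc_group (G : ptopologicalType)
  (mul : G -> G -> G) (inv : G -> G) (e : G) : Prop :=
  (forall x y z, mul x (mul y z) = mul (mul x y) z) /\
  (forall x, mul e x = x /\ mul x e = x) /\
  (forall x, mul (inv x) x = e /\ mul x (inv x) = e) /\
  continuous (fun p : G * G => mul p.1 p.2) /\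
  continuous inv /\
  hausdorff_space G /\
  locally_compact [set: G].

Definition is_compact_subgroup (G : ptopologicalType)
  (mul : G -> G -> G) (inv : G -> G) (e : G) (K : set G) : Prop :=
  compact K /\ K e /\ (forall a b, K a -> K b -> K (mul a b)) /\
  (forall a, K a -> K (inv a)).

Definition is_left_Haar (R : realType) (G : ptopologicalType)
  (mul : G -> G -> G) (mu : {measure set (borel G) -> \bar R}) : Prop :=
  (forall (x : G) (A : set (borel G)), measurable A ->
      mu [set mul x a | a in A] = mu A) /\
  (forall C : set G, compact C -> (mu C < +oo)%E) /\
  (forall A : set (borel G), measurable A ->
      mu A = ereal_inf [set mu U | U in [set U : set G | open U /\ A `<=` U]]) /\
  (forall U : set G, open U ->
      mu U = ereal_sup [set mu C | C in [set C : set G | compact C /\ C `<=` U]]) /\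
  (exists U : set G, open U /\ (0 < mu U)%E).

Definition bi_invariant (G : Type) (T : Type) (mul : G -> G -> G) (K : set G)
  (f : G -> T) : Prop :=
  forall x k1 k2, K k1 -> K k2 -> f (mul k1 (mul x k2)) = f x.

Definition is_weight (R : realType) (G : ptopologicalType) (w : G -> R) : Prop :=
  continuous w /\ forall x, 0 < w x.

Definition Cintegral (R : realType) (G : ptopologicalType)
  (mu : {measure set (borel G) -> \bar R}) (h : G -> R[i]) : R[i] :=
  ((Rintegral mu setT (fun x : borel G => complex.Re (h x)))%:C +
   'i%C * (Rintegral mu setT (fun x : borel G => complex.Im (h x)))%:C)%R.

Definition wconv (R : realType) (G : ptopologicalType)
  (mu : {measure set (borel G) -> \bar R}) (mul : G -> G -> G) (inv : G -> G)
  (w : G -> R) (f g : G -> R[i]) (x : G) : R[i] :=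
  Cintegral mu (fun y => f y * g (mul (inv y) x) *
                         ((w y * w (mul (inv y) x)) / w x)%:C).

(* f is (a representative of) an element of L^1_w(K\G/K):
   measurable, K-bi-invariant, and int_G |f| w < oo. *)
Definition in_L1w_biinv (R : realType) (G : ptopologicalType)
  (mu : {measure set (borel G) -> \bar R}) (mul : G -> G -> G) (K : set G)
  (w : G -> R) (f : G -> R[i]) : Prop :=
  measurable_fun setT (fun x : borel G => complex.Re (f x)) /\
  measurable_fun setT (fun x : borel G => complex.Im (f x)) /\
  bi_invariant mul K f /\
  (\int[mu]_x (Normc.normc (f x) * w x)%:E < +oo)%E.

(* (G, K, w) is a weighted Gelfand pair: convolution on L^1_w(K\G/K) is
   commutative (as classes, i.e. up to mu-null sets). *)
Definition weighted_Gelfand_pair (R : realType) (G : ptopologicalType)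
  (mu : {measure set (borel G) -> \bar R}) (mul : G -> G -> G) (inv : G -> G)
  (K : set G) (w : G -> R) : Prop :=
  forall f g : G -> R[i],
    in_L1w_biinv mu mul K w f -> in_L1w_biinv mu mul K w g ->
    {ae mu, forall x : borel G, wconv mu mul inv w f g x = wconv mu mul inv w g f x}.

Definition in_Cc_biinv (R : realType) (G : ptopologicalType)
  (mul : G -> G -> G) (K : set G) (f : G -> R[i]) : Prop :=
  continuous (fun x => complex.Re (f x)) /\ continuous (fun x => complex.Im (f x)) /\
  (exists C : set G, compact C /\ forall x, ~ C x -> f x = 0%R) /\
  bi_invariant mul K f.

(* Main.v *)
Require Import Defs.
From HB Require Import structures.
From mathcomp Require Import all_boot all_order all_algebra.
From mathcomp Require Import all_classical all_reals all_analysis.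
From mathcomp Require Import complex.
From mathcomp Require Import ring lra.
Import Order.TTheory GRing.Theory Num.Theory.
Import numFieldNormedType.Exports.
Local Open Scope classical_set_scope.
Local Open Scope ring_scope.
Section Grp.
Context {G : Type} {mul : G -> G -> G} {inv : G -> G} {e : G}.
Hypothesis mA : forall x y z, mul x (mul y z) = mul (mul x y) z.
Hypothesis m1 : forall x, mul e x = x /\ mul x e = x.
Hypothesis mV : forall x, mul (inv x) x = e /\ mul x (inv x) = e.

Lemma g_mul1 x : mul e x = x. Proof. by case: (m1 x). Qed.
Lemma g_mulg1 x : mul x e = x. Proof. by case: (m1 x). Qed.
Lemma g_mulVg x : mul (inv x) x = e. Proof. by case: (mV x). Qed.
Lemma g_mulgV x : mul x (inv x) = e. Proof. by case: (mV x). Qed.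
Lemma g_mulKg x y : mul (inv x) (mul x y) = y.
Proof. by rewrite mA g_mulVg g_mul1. Qed.
Lemma g_mulKVg x y : mul x (mul (inv x) y) = y.
Proof. by rewrite mA g_mulgV g_mul1. Qed.
Lemma g_invK x : inv (inv x) = x.
Proof.
have := g_mulKg (inv x) x.
by rewrite g_mulVg g_mulg1.
Qed.
Lemma g_invM x y : inv (mul x y) = mul (inv y) (inv x).
Proof.
have h : mul (mul x y) (mul (inv y) (inv x)) = e.
  by rewrite -mA g_mulKVg g_mulgV.
by rewrite -[LHS]g_mulg1 -h g_mulKg.
Qed.
Lemma g_inve : inv e = e.
Proof. by rewrite -[LHS]g_mulg1 g_mulVg. Qed.
End Grp.
Section Top.
Context {R : realType} {G : ptopologicalType}.

Lemma open_meas (U : set G) : open U -> measurable (U : set (borel G)).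
Proof. by move=> oU; apply: sub_sigma_algebra. Qed.

Lemma closed_meas (U : set G) : closed U -> measurable (U : set (borel G)).
Proof.
move=> cU; rewrite -[U]setCK; apply: measurableC; apply: open_meas.
by rewrite openC.
Qed.

Lemma cont_meas (h : G -> R) : continuous h ->
  measurable_fun setT (h : borel G -> R).
Proof.
move=> /continuousP ch.
apply: (measurability _ (measurable_realfun.RGenOpens.measurableE R)).
move=> _ [_ [a [b ->] <-]]; rewrite setTI; apply: open_meas.
by apply: ch; exact: interval_open.
Qed.
End Top.
Section Meas.
Context (R : realType) (G : ptopologicalType)
  (mul : G -> G -> G) (inv : G -> G) (e : G)
  (mu : {measure set (borel G) -> \bar R}).
Hypothesis Hgrp : is_lc_group mul inv e.
Hypothesis HH : is_left_Haar mul mu.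

Let mA : forall x y z, mul x (mul y z) = mul (mul x y) z.
Proof. by case: Hgrp. Qed.
Let m1 : forall x, mul e x = x /\ mul x e = x.
Proof. by case: Hgrp => _ []. Qed.
Let mV : forall x, mul (inv x) x = e /\ mul x (inv x) = e.
Proof. by case: Hgrp => _ [_ []]. Qed.
Let contM : continuous (fun p : G * G => mul p.1 p.2).
Proof. by case: Hgrp => _ [_ [_ []]]. Qed.
Let hausG : hausdorff_space G.
Proof. by case: Hgrp => _ [_ [_ [_ [_ []]]]]. Qed.

Lemma contML (c : G) : continuous (fun x => mul c x).
Proof.
move=> x; apply: (@continuous2_cvg _ _ _ _ _ _ (cst c) id mul c x).
- exact: (contM (c, x)).
- exact: cvg_cst.
- exact: cvg_id.
Qed.

Lemma compact_meas (C : set G) : compact C -> measurable (C : set (borel G)).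
Proof. by move=> cC; apply: closed_meas; exact: compact_closed. Qed.

Lemma pos_open (W : set G) : open W -> W e -> (0 < mu W)%E.
Proof.
move=> oW We.
case: HH => [inv_ [cpt [outer [inner [U [oU muU]]]]]].
rewrite lt0e measure_ge0 andbT; apply/eqP => W0.
rewrite inner // in muU; move: muU; apply/negP; rewrite -leNgt; apply: ge_ereal_sup.
move=> _ [C [cC CU] <-].
pose f := fun c : G => [set mul c a | a in W].
have fE c : f c = (fun x => mul (inv c) x) @^-1` W.
  apply/seteqP; split => x /=.
    by case=> a Wa <-; rewrite (g_mulKg mA m1 mV).
  by move=> Wx; exists (mul (inv c) x) => //; rewrite (g_mulKVg mA m1 mV).
have of_ c : open (f c).
  by rewrite fE; move/continuousP: (contML (inv c)); apply.
have mf c : mu (f c) = 0%E by rewrite /f inv_ //; exact: open_meas.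
have negs (s : seq G) : mu.-negligible [set x | exists2 c, c \in s & f c x].
  elim: s => [|c s IH].
    by apply: (negligibleS _ (negligible_set0 mu)) => x [c].
  have nf : mu.-negligible (f c : set (borel G)).
    by apply/negligibleP; [exact: open_meas | exact: mf].
  apply: (negligibleS _ (negligibleU nf IH)).
  move=> x [c']; rewrite in_cons => /orP[/eqP -> fx|cs fx]; first by left.
  by right; exists c'.
have [D' _ CD'] : finite_subset_cover C f C.
  move: cC; rewrite compact_cover; apply => //.
  move=> x Cx; exists x => //; exists e => //; exact: (g_mulg1 m1).
have : mu.-negligible (C : set (borel G)).
  have h := negs (finmap.enum_fset D').
  apply: negligibleS h => x /CD' [c Dc fcx].
  by exists c.
by move/(measure_negligible (compact_meas C cC)) => ->.
Qed.


Lemma sec_cont (Psi : G * G -> R) x : continuous Psi -> continuous (fun y => Psi (y, x)).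
Proof.
move=> cP y; apply: (continuous_comp (f := fun y => (y, x))).
  by apply: cvg_pair; [exact: cvg_id | exact: cvg_cst].
exact: cP.
Qed.

Lemma loc_unif (Psi : G * G -> R) (eps : R) (y0 : G) : continuous Psi -> 0 < eps ->
  \forall y \near y0 & x \near e, `|Psi (y,x) - Psi (y,e)| < eps.
Proof.
move=> cP ep.
have h1 := cvgr_dist_lt _ _ (cP (y0, e)) _ (divr_gt0 ep (ltr0Sn _ 1)).
have h2 := cvgr_dist_lt _ _ (sec_cont Psi e cP y0) _ (divr_gt0 ep (ltr0Sn _ 1)).
case: h1 => [[A B] /= [nA nB] AB].
exists (A `&` [set y | `|Psi (y0, e) - Psi (y, e)| < eps / 2], B).
  split => //=; apply: filterI => //; exact: h2.
case=> y x /= [[Ay Ay'] Bx] /=.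
have := AB (y, x) (conj Ay Bx) => /= h.
rewrite (_ : Psi (y, x) - Psi (y, e) = (Psi (y0,e) - Psi (y,e)) - (Psi (y0,e) - Psi (y,x))); last by ring.
rewrite (splitr eps); apply: le_lt_trans (ler_normB _ _) _.
by apply: ltrD.
Qed.

Lemma cont_bounded (h : G -> R) (L : set G) : continuous h -> compact L ->
  [bounded h y | y in L].
Proof.
move=> ch cL.
have := compact_bounded (continuous_compact (continuous_subspaceT ch) cL).
move=> [M [Mr HM]]; exists M; split => // N MN y Ly.
by apply: (HM N MN); exists y.
Qed.

Lemma int_supp (Psi : G -> R) (L : set G) : continuous Psi -> compact L ->
  (forall y, ~ L y -> Psi y = 0) ->
  Rintegral mu setT (fun y : borel G => Psi y) = Rintegral mu L (fun y : borel G => Psi y)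
  /\ mu.-integrable (L : set (borel G)) (EFin \o (fun y : borel G => Psi y)).
Proof.
move=> cP cL H; split.
  rewrite [RHS]Rintegral_mkcond; apply: eq_Rintegral => y _ /=; rewrite patchE.
  case: ifPn => // /negP yL; rewrite H // => Ly; apply: yL; by rewrite inE.
case: HH => [_ [cpt _]].
apply: measurable_bounded_integrable.
- exact: compact_meas.
- exact: cpt.
- by apply: (measurable_funS measurableT) => //; exact: cont_meas.
- exact: cont_bounded.
Qed.

Lemma approx (Psi : G * G -> R) (L : set G) (eps : R) :
  continuous Psi -> compact L -> 0 < eps ->
  (\forall x \near e, forall y, ~ L y -> Psi (y, x) = 0) ->
  \forall x \near e, `|Rintegral mu setT (fun y : borel G => Psi (y, x))
     - Rintegral mu setT (fun y : borel G => Psi (y, e))| <= eps * fine (mu L).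
Proof.
move=> cP cL ep Hs.
have mL := compact_meas L cL.
have fL : (mu L < +oo)%E by case: HH => [_ [cpt _]]; exact: cpt.
have /compact_near_coveringP cov := cL.
have Hc := cov G (nbhs e) (fun x y => `|Psi (y,x) - Psi (y,e)| < eps) _
  (fun y0 _ => loc_unif Psi eps y0 cP ep).
have He := nbhs_singleton Hs.
near=> x.
have Hx : forall y, ~ L y -> Psi (y, x) = 0 by near: x.
have Hcx : L `<=` (fun y => `|Psi (y,x) - Psi (y,e)| < eps) by near: x; apply: Hc.
have [E1 I1] := int_supp _ _ (sec_cont Psi x cP) cL Hx.
have [E2 I2] := int_supp _ _ (sec_cont Psi e cP) cL He.
have IB : mu.-integrable (L : set (borel G))
    (EFin \o (fun t : borel G => Psi (t, x) - Psi (t, e))).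
  by apply: eq_integrable (integrableB mL I1 I2) => //= t _; rewrite EFinB.
rewrite E1 E2 -RintegralB //.
apply: le_trans (le_normr_Rintegral _ _) _ => //.
rewrite -Rintegral_cst //.
apply: le_Rintegral => //.
- exact: integrable_norm IB.
- apply: measurable_bounded_integrable => //.
  all: first [exact: measurable_cst | exact: bounded_cst | idtac].
- by move=> y Ly; apply: ltW; apply: Hcx.
Unshelve. all: by end_near.
Qed.


Lemma ae_at_e (a b : G -> R) :
  {ae mu, forall x : borel G, a x = b x} ->
  (forall eps, 0 < eps -> \forall x \near e, `|a x - a e| <= eps) ->
  (forall eps, 0 < eps -> \forall x \near e, `|b x - b e| <= eps) ->
  a e = b e.
Proof.
move=> Hae Ha Hb; apply/eqP; apply/negPn/negP => neq.
have d0 : 0 < `|a e - b e| by rewrite normr_gt0 subr_eq0.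
set d := `|a e - b e| in d0.
have d3 : 0 < d / 3 by rewrite divr_gt0.
have Hn : \forall x \near e, a x != b x.
  near=> x; apply/eqP => abx.
  have h1 : `|a x - a e| <= d / 3 by near: x; exact: Ha.
  have h2 : `|b x - b e| <= d / 3 by near: x; exact: Hb.
  have eqd : d = `|- (a x - a e) + (b x - b e)|.
    by rewrite /d abx; congr `|_|; ring.
  have : d <= d / 3 + d / 3.
    rewrite {1}eqd; apply: le_trans (ler_normD _ _) _; rewrite normrN; exact: lerD.
  lra.
case: Hae => N [mN N0 sN].
move: Hn; rewrite /prop_near1 nbhsE /=; case=> O [oO Oe] OB.
have pO : (0 < mu O)%E := pos_open O oO Oe.
have : (mu O <= mu N)%E.
  apply: le_measure; rewrite ?inE //; first exact: open_meas.
  by move=> x /OB /= nab; apply: sN => /= ab; move/eqP: nab; apply.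
by rewrite N0 => /(lt_le_trans pO); rewrite ltxx.
Unshelve. all: by end_near.
Qed.


Lemma cont_fst {A B : topologicalType} : continuous (@fst A B).
Proof. by move=> [a b]; apply: cvg_fst. Qed.
Lemma cont_snd {A B : topologicalType} : continuous (@snd A B).
Proof. by move=> [a b]; apply: cvg_snd. Qed.

Let contI : continuous inv.
Proof. by case: Hgrp => _ [_ [_ [_ []]]]. Qed.

Lemma contJ : continuous (fun q : G * G => mul (inv q.1) q.2).
Proof.
move=> q; apply: (@continuous2_cvg _ _ _ _ _ _ (fun q : G * G => inv q.1) snd mul).
- exact: (contM (inv q.1, q.2)).
- exact: (continuous_comp (cont_fst q) (contI _)).
- exact: cont_snd.
Qed.

Lemma cont3 : continuous (fun q : G * (G * G) => mul q.1 (mul q.2.1 q.2.2)).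
Proof.
move=> q; apply: (@continuous2_cvg _ _ _ _ _ _ fst (fun q : G * (G * G) => mul q.2.1 q.2.2) mul).
- exact: (contM (q.1, mul q.2.1 q.2.2)).
- exact: cont_fst.
- apply: (@continuous_comp _ _ _ snd (fun p : G * G => mul p.1 p.2)).
    exact: cont_snd.
  exact: contM.
Qed.

Lemma int_patch (h : G -> R) (L : set G) : continuous h -> compact L ->
  mu.-integrable setT (fun y : borel G => ((h \_ L) y)%:E).
Proof.
move=> ch cL.
have mL := compact_meas L cL.
have : mu.-integrable (L : set (borel G)) (EFin \o (h : borel G -> R)).
  case: HH => [_ [cpt _]].
  apply: measurable_bounded_integrable => //.
  - exact: cpt.
  - by apply: (measurable_funS measurableT) => //; exact: cont_meas.
  - exact: cont_bounded.
rewrite integrable_mkcond //; apply: eq_integrable => // y _.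
by rewrite !patchE; case: ifP.
Qed.

Local Open Scope complex_scope.

Lemma ReC (h : G -> R[i]) :
  complex.Re (Cintegral mu h) = Rintegral mu setT (fun x : borel G => complex.Re (h x)).
Proof. by rewrite /Cintegral /=; ring. Qed.

Context (K : set G) (w : G -> R).
Hypothesis HK : is_compact_subgroup mul inv e K.
Hypothesis Hw : is_weight w.
Hypothesis Hwb : bi_invariant mul K w.
Hypothesis we1 : w e = 1.
Hypothesis HGP : weighted_Gelfand_pair mu mul inv K w.

Let cw : continuous w. Proof. by case: Hw. Qed.
Let wpos x : 0 < w x. Proof. by case: Hw => _; apply. Qed.

Lemma cPsi1 (u : G -> R) : continuous u ->
  continuous (fun q : G * G => u q.1 * (w q.1 * w (mul (inv q.1) q.2) / w q.2)).
Proof.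
move=> cu q; apply: cvgM.
  exact: (continuous_comp (cont_fst q) (cu _)).
apply: cvgM; first apply: cvgM.
- exact: (continuous_comp (cont_fst q) (cw _)).
- exact: (continuous_comp (contJ q) (cw _)).
- apply: cvgV; first by rewrite gt_eqF.
  exact: (continuous_comp (cont_snd q) (cw _)).
Qed.

Lemma cPsi2 (u : G -> R) : continuous u ->
  continuous (fun q : G * G => u (mul (inv q.1) q.2) * (w q.1 * w (mul (inv q.1) q.2) / w q.2)).
Proof.
move=> cu q; apply: cvgM.
  exact: (continuous_comp (contJ q) (cu _)).
apply: cvgM; first apply: cvgM.
- exact: (continuous_comp (cont_fst q) (cw _)).
- exact: (continuous_comp (contJ q) (cw _)).
- apply: cvgV; first by rewrite gt_eqF.
  exact: (continuous_comp (cont_snd q) (cw _)).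
Qed.


Lemma real_main (u : G -> R) : continuous u ->
  (exists S : set G, compact S /\ forall x, ~ S x -> u x = 0) ->
  bi_invariant mul K u ->
  Rintegral mu setT (fun x : borel G => u x * (w x * w (inv x))) =
  Rintegral mu setT (fun x : borel G => u (inv x) * (w (inv x) * w x)).
Proof.
move=> cu [S [cS Su]] Hub.
have [cK [Ke [KM KI]]] := HK.
have lc : locally_compact [set: G] by case: Hgrp => _ [_ [_ [_ [_ []]]]].
have [V0 nV0w [cV0 _]] := lc e I.
have nV0 : nbhs e V0 by move: nV0w; rewrite withinET.
have V0e : V0 e := nbhs_singleton nV0.
pose M := S `|` inv @` S `|` V0.
pose M2 := (fun p : G * G => mul p.1 p.2) @` (M `*` M).
pose Om := (fun q : G * (G * G) => mul q.1 (mul q.2.1 q.2.2)) @` (K `*` (M2 `*` K)).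
have cM : compact M.
  apply: compactU => //; apply: compactU => //.
  exact: (continuous_compact (continuous_subspaceT contI) cS).
have cM2 : compact M2.
  exact: (continuous_compact (continuous_subspaceT contM) (compact_setX cM cM)).
have cOm : compact Om.
  exact: (continuous_compact (continuous_subspaceT cont3)
     (compact_setX cK (compact_setX cM2 cK))).
have M2I a b : M a -> M b -> M2 (mul a b) by move=> Ma Mb; exists (a, b).
have OmI z : M2 z -> Om z.
  by move=> M2z; exists (e, (z, e)) => //=; rewrite (g_mul1 m1) (g_mulg1 m1).
have MS y : S y -> M y by move=> Sy; left; left.
have MiS y : S y -> M (inv y) by move=> Sy; left; right; exists y.
have MV x : V0 x -> M x by move=> Vx; right.
have Om_S y : S y -> Om y.
  by move=> Sy; rewrite -(g_mulg1 m1 y); apply/OmI/M2I; [exact: MS | exact: MV].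
have Om1 x y : V0 x -> S y -> Om (mul (inv y) x).
  by move=> Vx Sy; apply/OmI/M2I; [exact: MiS | exact: MV].
have Om2 x y : V0 x -> S (mul (inv y) x) -> Om y.
  move=> Vx Sy; have := OmI _ (M2I _ _ (MV _ Vx) (MiS _ Sy)).
  by rewrite (g_invM mA m1 mV) (g_invK mA m1 mV) (g_mulKVg mA m1 mV).
have Omb1 x k1 k2 : K k1 -> K k2 -> Om x -> Om (mul k1 (mul x k2)).
  move=> K1 K2 [[k [z k']] /= [Kk [M2z Kk']] <-].
  exists (mul k1 k, (z, mul k' k2)) => /=; first by split => //; [exact: KM | split => //; exact: KM].
  by rewrite !mA.
have Omb x k1 k2 : K k1 -> K k2 -> Om (mul k1 (mul x k2)) <-> Om x.
  move=> K1 K2; split; last exact: Omb1.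
  move=> /(Omb1 _ (inv k1) (inv k2) (KI _ K1) (KI _ K2)).
  by rewrite !mA (g_mulVg mV) (g_mul1 m1) -mA (g_mulgV mV) (g_mulg1 m1).
have mOm : measurable (Om : set (borel G)) := compact_meas Om cOm.
pose f1 := fun x => (u x)%:C.
pose g1 := fun x => ((\1_Om x : R))%:C.
have L1f : in_L1w_biinv mu mul K w f1.
  split; first exact: cont_meas.
  split; first exact: measurable_cst.
  split; first by move=> x k1 k2 K1 K2; rewrite /f1 Hub.
  have cuw : continuous (fun x => u x * w x).
    by move=> x; apply: cvgM; [exact: cu | exact: cw].
  have := int_patch (fun x => u x * w x) S cuw cS.
  move/integrableP => [_]; apply: le_lt_trans; rewrite le_eqVlt; apply/orP; left.
  apply/eqP; apply: eq_integral => x _ /=.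
  rewrite expr0n /= addr0 sqrtr_sqr patchE; case: ifPn => xS.
    by rewrite normrM (gtr0_norm (wpos x)).
  rewrite Su ?normr0 ?mul0r ?normr0 //.
  by move=> Sx; move/negP: xS; apply; rewrite inE.
have L1g : in_L1w_biinv mu mul K w g1.
  split; first exact: measurable_realfun.measurable_indic.
  split; first exact: measurable_cst.
  split.
    move=> x k1 k2 K1 K2; rewrite /g1 !indicE.
    case: (Omb x k1 k2 K1 K2) => O1 O2.
    have -> : (mul k1 (mul x k2) \in Om) = (x \in Om).
      by apply/idP/idP => /set_mem h; apply/mem_set; [exact: O1 | exact: O2].
    by [].
  have := int_patch w Om cw cOm.
  move/integrableP => [_]; apply: le_lt_trans; rewrite le_eqVlt; apply/orP; left.
  apply/eqP; apply: eq_integral => x _ /=.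
  rewrite expr0n /= addr0 sqrtr_sqr patchE indicE; case: ifPn => xO.
    by rewrite normr1 mul1r (gtr0_norm (wpos x)).
  by rewrite /= ?normr0 ?mul0r ?normr0.
have Hae := HGP f1 g1 L1f L1g.
pose a x := complex.Re (wconv mu mul inv w f1 g1 x).
pose b x := complex.Re (wconv mu mul inv w g1 f1 x).
have Haeab : {ae mu, forall x : borel G, a x = b x}.
  by apply: filterS Hae => x /= h; rewrite /a /b h.
pose Psi1 := fun q : G * G => u q.1 * (w q.1 * w (mul (inv q.1) q.2) / w q.2).
pose Psi2 := fun q : G * G => u (mul (inv q.1) q.2) * (w q.1 * w (mul (inv q.1) q.2) / w q.2).
have aE x : V0 x -> a x = Rintegral mu setT (fun y : borel G => Psi1 (y, x)).
  move=> Vx; rewrite /a /wconv ReC; apply: eq_Rintegral => y _ /=.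
  have [uy0|uyn] := eqVneq (u y) 0; first by rewrite /Psi1 /= uy0; ring.
  have Sy : S y by apply: contrapT => nS; move/eqP: uyn; apply; exact: Su.
  rewrite indicE mem_set /=; last exact: Om1.
  by rewrite /Psi1 /=; ring.
have bE x : V0 x -> b x = Rintegral mu setT (fun y : borel G => Psi2 (y, x)).
  move=> Vx; rewrite /b /wconv ReC; apply: eq_Rintegral => y _ /=.
  have [uy0|uyn] := eqVneq (u (mul (inv y) x)) 0; first by rewrite /Psi2 /= uy0; ring.
  have Sy : S (mul (inv y) x).
    by apply: contrapT => nS; move/eqP: uyn; apply; exact: Su.
  rewrite indicE mem_set /=; last exact: Om2 Sy.
  by rewrite /Psi2 /=; ring.
pose c := fine (mu Om).
have c0 : 0 <= c by apply: fine_ge0; exact: measure_ge0.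
have scale eps : 0 < eps -> 0 < eps / (c + 1) /\ eps / (c + 1) * c <= eps.
  move=> ep; have c1 : 0 < c + 1 by lra.
  split; first exact: divr_gt0.
  rewrite mulrAC ler_pdivrMr // ler_pM2l //; lra.
have Hs1 : \forall x \near e, forall y, ~ Om y -> Psi1 (y, x) = 0.
  near=> x => y nO; rewrite /Psi1 /= Su ?mul0r // => Sy; apply: nO; exact: Om_S.
have Hs2 : \forall x \near e, forall y, ~ Om y -> Psi2 (y, x) = 0.
  near=> x => y nO.
  have Vx : V0 x by near: x.
  rewrite /Psi2 /= Su ?mul0r // => Sy; apply: nO; exact: Om2 Vx Sy.
have Ha eps : 0 < eps -> \forall x \near e, `|a x - a e| <= eps.
  move=> ep; have [ep' sc] := scale eps ep.
  have := approx _ _ _ (cPsi1 _ cu) cOm ep' Hs1.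
  apply: filter_app; near=> x => h.
  have Vx : V0 x by near: x.
  by rewrite (aE x Vx) (aE e V0e); exact: le_trans h sc.
have Hb eps : 0 < eps -> \forall x \near e, `|b x - b e| <= eps.
  move=> ep; have [ep' sc] := scale eps ep.
  have := approx _ _ _ (cPsi2 _ cu) cOm ep' Hs2.
  apply: filter_app; near=> x => h.
  have Vx : V0 x by near: x.
  by rewrite (bE x Vx) (bE e V0e); exact: le_trans h sc.
have := ae_at_e _ _ Haeab Ha Hb.
rewrite (aE e V0e) (bE e V0e) => Heq.
rewrite [LHS](_ : _ = Rintegral mu setT (fun y : borel G => Psi1 (y, e))); last first.
  by apply: eq_Rintegral => y _; rewrite /Psi1 /= (g_mulg1 m1) we1 divr1.
rewrite Heq; apply: eq_Rintegral => y _.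
by rewrite /Psi2 /= (g_mulg1 m1) we1 divr1 [w y * _]mulrC.
Unshelve. all: by end_near.
Qed.
End Meas.

Local Open Scope complex_scope.

Theorem mainTheorem7 (R : realType) (G : ptopologicalType)
  (mul : G -> G -> G) (inv : G -> G) (e : G)
  (mu : {measure set (borel G) -> \bar R}) (K : set G) (w : G -> R) :
  is_lc_group mul inv e ->
  is_left_Haar mul mu ->
  is_compact_subgroup mul inv e K ->
  is_weight w -> bi_invariant mul K w -> w e = 1 ->
  weighted_Gelfand_pair mu mul inv K w ->
  forall f : G -> R[i], in_Cc_biinv mul K f ->
  Cintegral mu (fun x => f x * (w x * w (inv x))%:C) =
  Cintegral mu (fun x => f (inv x) * (w (inv x) * w x)%:C).
Proof.
move=> Hgrp HH HK Hw Hwb we1 HGP f [cRe [cIm [[C [cC Cf]] fb]]].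
have Re_mulr (z : R[i]) (r : R) : complex.Re (z * r%:C) = complex.Re z * r.
  by case: z => a b /=; ring.
have Im_mulr (z : R[i]) (r : R) : complex.Im (z * r%:C) = complex.Im z * r.
  by case: z => a b /=; ring.
have RM := @real_main R G mul inv e mu Hgrp HH K w HK Hw we1 HGP.
rewrite /Cintegral; congr (_%:C + _ * _%:C).
- transitivity (Rintegral mu setT (fun x : borel G => complex.Re (f x) * (w x * w (inv x)))).
    by apply: eq_Rintegral => x _; rewrite Re_mulr.
  rewrite RM //.
  + by apply: eq_Rintegral => x _; rewrite Re_mulr.
  + by exists C; split => // x nC; rewrite Cf.
  + by move=> x k1 k2 h1 h2 /=; rewrite fb.
- transitivity (Rintegral mu setT (fun x : borel G => complex.Im (f x) * (w x * w (inv x)))).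
    by apply: eq_Rintegral => x _; rewrite Im_mulr.
  rewrite RM //.
  + by apply: eq_Rintegral => x _; rewrite Im_mulr.
  + by exists C; split => // x nC; rewrite Cf.
  + by move=> x k1 k2 h1 h2 /=; rewrite fb.
Qed.
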